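(* Let $\widetilde{\mathrm{Sp}}_{2r}^{(n)}$ be the $n$-fold Brylinski--Deligne cover of $\mathrm{Sp}_{2r}$ associated with the Weyl-invariant quadratic form $Q$ on the cocharacter lattice $Y$ normalized by $Q(\alpha_r^\vee)=1$, where $\alpha_r$ is the long simple root. If $4\mid n$, then $\widetilde{\mathrm{Sp}}_{2r}^{(n)}$ is persistent.
   Context: Root datum $(X,\Phi,\Delta;Y,\Phi^\vee,\Delta^\vee)$ of $\mathrm{Sp}_{2r}$, Weyl group $W$, $\rho^\vee$ the half-sum of positive coroots. $B_Q(y,z)=Q(y+z)-Q(y)-Q(z)$, $Y_{Q,n}=\{y\in Y:B_Q(y,z)\in n\mathbf Z\ \forall z\in Y\}$, $n_\alpha=n/\gcd(n,Q(\alpha^\vee))$, $Y^{sc}_{Q,n}$ the lattice spanned by $\{n_\alpha\alpha^\vee:\alpha\in\Delta\}$. $W$ acts on $\mathscr X_{Q,n}=Y/Y_{Q,n}$ and $\mathscr X^{sc}_{Q,n}=Y/Y^{sc}_{Q,n}$ by the twisted action $w[y]=w(y-\rho^\vee)+\rho^\vee$. The cover is persistent if for every $y\in Y$, the stabilizer in $W$ of the image of $y$ in $\mathscr X^{sc}_{Q,n}$ equals the stabilizer of the image of $y$ in $\mathscr X_{Q,n}$. *)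

(* Defs.v *)
(* Concrete root datum of Sp_{2r}:
   X = Y = Z^r (row vectors), pairing = dot product,
   simple roots  alpha_i = e_i - e_{i+1} (i < r-1),  alpha_{r-1} = 2 e_{r-1} (long);
   simple coroots alpha_i^v = e_i - e_{i+1} (i < r-1), alpha_{r-1}^v = e_{r-1}.
   Indices are 0-based: the paper's alpha_r is our index r-1. *)
From HB Require Import structures.
From mathcomp Require Import all_boot all_order all_algebra.
Set Implicit Arguments. Unset Strict Implicit. Unset Printing Implicit Defensive.
Import Order.TTheory GRing.Theory Num.Theory.
Local Open Scope ring_scope.

Section SpDatum.
Variable r : nat.

Definition ev (i : 'I_r) : 'rV[int]_r := \row_j ((j == i)%:R).

Definition simple_root (i : 'I_r) : 'rV[int]_r :=
  \row_j (if (i.+1 < r)%N then ((j == i :> nat)%:R - (j == i.+1 :> nat)%:R)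
          else 2 * (j == i :> nat)%:R).
Definition simple_coroot (i : 'I_r) : 'rV[int]_r :=
  \row_j (if (i.+1 < r)%N then ((j == i :> nat)%:R - (j == i.+1 :> nat)%:R)
          else (j == i :> nat)%:R).

Definition emb (y : 'rV[int]_r) : 'rV[rat]_r := map_mx intr y.

(* half-sum of positive coroots: positive coroots of Sp_{2r} are
   e_i - e_j, e_i + e_j (i < j) and e_i *)
Definition rho_vee : 'rV[rat]_r :=
  2^-1 *: emb (\sum_(i < r) \sum_(j < r | (i < j)%N)
                  ((ev i - ev j) + (ev i + ev j))
               + \sum_(i < r) ev i).

Definition sref (i : 'I_r) (v : 'rV[rat]_r) : 'rV[rat]_r :=
  v - (\sum_j ((simple_root i 0 j)%:~R * v 0 j)) *: emb (simple_coroot i).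

(* an element of W given as a word in the simple reflections *)
Definition weyl_act (w : seq 'I_r) (v : 'rV[rat]_r) : 'rV[rat]_r :=
  foldr sref v w.

Definition twisted_act (w : seq 'I_r) (y : 'rV[int]_r) : 'rV[rat]_r :=
  weyl_act w (emb y - rho_vee) + rho_vee.

(* the Weyl-invariant quadratic form with Q(alpha_r^v) = 1 *)
Definition Qsp (y : 'rV[int]_r) : int := \sum_j (y 0 j) ^+ 2.

Definition BQ (Q : 'rV[int]_r -> int) (y z : 'rV[int]_r) : int :=
  Q (y + z) - Q y - Q z.

Definition in_YQn (Q : 'rV[int]_r -> int) (n : nat) (y : 'rV[int]_r) : Prop :=
  forall z : 'rV[int]_r, (n%:Z %| BQ Q y z)%Z.

Definition n_alpha (Q : 'rV[int]_r -> int) (n : nat) (i : 'I_r) : nat :=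
  (n %/ gcdn n `|Q (simple_coroot i)|)%N.

Definition in_YQn_sc (Q : 'rV[int]_r -> int) (n : nat) (y : 'rV[int]_r) : Prop :=
  exists c : 'I_r -> int,
    y = \sum_(i < r) (c i * (n_alpha Q n i)%:Z) *: simple_coroot i.

(* w fixes the image of y in Y / L under the twisted action *)
Definition twisted_fixes (L : 'rV[int]_r -> Prop) (w : seq 'I_r) (y : 'rV[int]_r)
  : Prop :=
  exists l : 'rV[int]_r, L l /\ twisted_act w y - emb y = emb l.

(* persistence: stabilizers in W agree for every y *)
Definition persistent (Q : 'rV[int]_r -> int) (n : nat) : Prop :=
  forall (y : 'rV[int]_r) (w : seq 'I_r),
    twisted_fixes (in_YQn_sc Q n) w y <-> twisted_fixes (in_YQn Q n) w y.

End SpDatum.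

(* Main.v *)
Require Import Defs.
From mathcomp Require Import all_boot all_order all_algebra.
From mathcomp Require Import ring zify.
Set Implicit Arguments. Unset Strict Implicit. Unset Printing Implicit Defensive.
Import Order.TTheory GRing.Theory Num.Theory.
Local Open Scope ring_scope.

Lemma Qsp_coroot r (i : 'I_r) : Qsp (simple_coroot i) = if (i.+1 < r)%N then 2 else 1.
Proof.
rewrite /Qsp.
case: ifP => Hi.
- pose k := Ordinal Hi.
  rewrite (bigD1 i) //= (bigD1 k) /=; last by rewrite -val_eqE /= gtn_eqF.
  rewrite big1 ?addr0.
  + by rewrite !mxE Hi /= eqxx ltn_eqF // gtn_eqF // eqxx.
  + move=> j /andP[Hji Hjk]; rewrite !mxE Hi.
    move: Hji Hjk; rewrite -!val_eqE /= => /negbTE -> /negbTE ->.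
    by rewrite subr0 expr0n.
- rewrite (bigD1 i) //= big1 ?addr0.
  + by rewrite !mxE Hi eqxx.
  + move=> j Hji; rewrite !mxE Hi.
    move: Hji; rewrite -!val_eqE /= => /negbTE ->.
    by rewrite /= ?mulr0 expr0n.
Qed.

Lemma sum_delta (R : pzRingType) r (F : 'I_r -> R) (b : 'I_r) :
  \sum_j F j * (b == j)%:R = F b.
Proof.
rewrite (bigD1 b) //= eqxx mulr1 big1 ?addr0 // => j.
by rewrite eq_sym => /negbTE ->; rewrite mulr0.
Qed.

Lemma n_alpha_val r n (i : 'I_r) : (2 %| n)%N ->
  n_alpha (@Qsp r) n i = if (i.+1 < r)%N then (n %/ 2)%N else n.
Proof.
move=> H2; rewrite /n_alpha Qsp_coroot; case: ifP => _ /=.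
- by rewrite (gcdn_idPr H2).
- by rewrite gcdn1 divn1.
Qed.

Lemma sc0 r Q n : in_YQn_sc (r:=r) Q n 0.
Proof. by exists (fun=> 0); rewrite big1 // => i _; rewrite mul0r scale0r. Qed.

Lemma scD r Q n y1 y2 : in_YQn_sc (r:=r) Q n y1 -> in_YQn_sc Q n y2 ->
  in_YQn_sc Q n (y1 + y2).
Proof.
move=> [c1 ->] [c2 ->]; exists (fun i => c1 i + c2 i).
rewrite -big_split; apply: eq_bigr => i _; by rewrite mulrDl scalerDl.
Qed.

Lemma scZ r Q n (a : int) y : in_YQn_sc (r:=r) Q n y -> in_YQn_sc Q n (a *: y).
Proof.
move=> [c ->]; exists (fun i => a * c i).
rewrite scaler_sumr; apply: eq_bigr => i _; by rewrite scalerA mulrA.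
Qed.

Lemma sc_sum r Q n (I : finType) (F : I -> 'rV[int]_r) :
  (forall i, in_YQn_sc Q n (F i)) -> in_YQn_sc Q n (\sum_i F i).
Proof.
move=> H; apply: (big_ind (in_YQn_sc Q n)) => //; [exact: sc0| exact: scD].
Qed.

Lemma sc_gen r Q n (i : 'I_r) (a : int) :
  in_YQn_sc Q n ((a * (n_alpha Q n i)%:Z) *: simple_coroot i).
Proof.
exists (fun j => if j == i then a else 0).
rewrite (bigD1 i) //= eqxx big1 ?addr0 // => j /negbTE ->.
by rewrite mul0r scale0r.
Qed.

Lemma coroot_short r (j : 'I_r) (H : (j.+1 < r)%N) :
  simple_coroot j = ev j - ev (Ordinal H).
Proof.
apply/matrixP => a b; rewrite !mxE H; by [].
Qed.

Lemma coroot_long r (j : 'I_r) : ~~ (j.+1 < r)%N -> simple_coroot j = ev j.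
Proof.
move=> /negbTE H; apply/matrixP => a b; rewrite !mxE H; by [].
Qed.

Lemma row_decomp r (l : 'rV[int]_r) : l = \sum_j l 0 j *: ev j.
Proof.
apply/matrixP => a b; rewrite summxE (ord1 a).
under eq_bigr do rewrite !mxE.
by rewrite sum_delta.
Qed.
Lemma chain r n (lst : 'I_r) : (lst.+1 = r)%N -> (2 %| n)%N ->
  forall d (j : 'I_r), (lst - j = d)%N ->
  in_YQn_sc (@Qsp r) n ((n %/ 2)%N%:Z *: (ev j - ev lst)).
Proof.
move=> Hl H2; elim=> [|d IH] j Hd.
- have -> : j = lst by apply/val_inj => /=; have := ltn_ord j; lia.
  by rewrite subrr scaler0; apply: sc0.
- have Hj : (j.+1 < r)%N by lia.
  have -> : ev j - ev lst = (ev j - ev (Ordinal Hj)) + (ev (Ordinal Hj) - ev lst).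
    by rewrite addrA subrK.
  rewrite scalerDr; apply: scD; last by apply: IH => /=; lia.
  rewrite -coroot_short -[(n %/ 2)%N%:Z]mul1r.
  have := sc_gen (@Qsp r) n j 1; by rewrite n_alpha_val // Hj.
Qed.

Lemma sc_of r n (lst : 'I_r) (l : 'rV[int]_r) (k : 'I_r -> int) :
  (lst.+1 = r)%N -> (2 %| n)%N ->
  (forall j, l 0 j = k j * (n %/ 2)%N%:Z) -> (2 %| \sum_j k j)%Z ->
  in_YQn_sc (@Qsp r) n l.
Proof.
move=> Hl H2 Hk HS.
set m := (n %/ 2)%N%:Z.
set S := \sum_j k j.
have E : (S %/ 2)%Z * n%:Z = \sum_j k j * m.
  rewrite -mulr_suml -/S.
  have -> : n%:Z = 2 * m by rewrite /m -PoszM mulnC divnK.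
  by rewrite mulrA divzK.
have -> : l = \sum_j k j *: (m *: (ev j - ev lst)) + ((S %/ 2)%Z * n%:Z) *: ev lst.
  suff -> : \sum_j k j *: (m *: (ev j - ev lst)) = l - ((S %/ 2)%Z * n%:Z) *: ev lst.
    by rewrite subrK.
  rewrite E scaler_suml (row_decomp l) -sumrB; apply: eq_bigr => j _.
  by rewrite Hk scalerA scalerBr.
apply: scD.
- apply: sc_sum => j; apply: scZ; exact: (chain Hl H2 (erefl _)).
- have Hn : ~~ (lst.+1 < r)%N by rewrite Hl ltnn.
  rewrite -(coroot_long Hn).
  have := sc_gen (@Qsp r) n lst (S %/ 2)%Z; by rewrite n_alpha_val // (negbTE Hn).
Qed.

Definition dotz r (u v : 'rV[int]_r) : int := \sum_j u 0 j * v 0 j.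

Lemma BQ_eq r (y z : 'rV[int]_r) : BQ (@Qsp r) y z = 2 * dotz y z.
Proof.
rewrite /BQ /Qsp /dotz -!sumrB mulr_sumr; apply: eq_bigr => j _.
rewrite !mxE; ring.
Qed.

Lemma dotz_sum r (I : finType) (a : I -> int) (u : I -> 'rV[int]_r) z :
  dotz (\sum_i a i *: u i) z = \sum_i a i * dotz (u i) z.
Proof.
rewrite /dotz.
under eq_bigr do rewrite summxE mulr_suml.
rewrite exchange_big; apply: eq_bigr => i _.
rewrite mulr_sumr; apply: eq_bigr => j _; by rewrite !mxE mulrA.
Qed.

Lemma forward r n (l : 'rV[int]_r) : (2 %| n)%N ->
  in_YQn_sc (@Qsp r) n l -> in_YQn (@Qsp r) n l.
Proof.
move=> H2 [c ->] z; rewrite BQ_eq dotz_sum mulr_sumr.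
apply: (big_ind (fun x => (n%:Z %| x)%Z)) => //.
- by move=> x y; apply: rpredD.
- move=> i _.
  have -> : 2 * (c i * (n_alpha (@Qsp r) n i)%:Z * dotz (simple_coroot i) z)
           = (2 * (n_alpha (@Qsp r) n i)%:Z) * (c i * dotz (simple_coroot i) z) by ring.
  apply: dvdz_mulr.
  rewrite n_alpha_val //; case: ifP => _.
  + by rewrite -PoszM mulnC divnK.
  + exact: dvdz_mull (dvdzz _).
Qed.
Definition sqr r (v : 'rV[rat]_r) : rat := \sum_j v 0 j ^+ 2.

Lemma root_coroot r (i j : 'I_r) :
  simple_root i 0 j * Qsp (simple_coroot i) = 2 * simple_coroot i 0 j.
Proof.
rewrite Qsp_coroot !mxE; case: ifP => _; [by rewrite mulrC | by rewrite mulr1].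
Qed.

Lemma sref_sqr r (i : 'I_r) (v : 'rV[rat]_r) : sqr (sref i v) = sqr v.
Proof.
rewrite /sref /sqr.
set a := (\sum_j (simple_root i 0 j)%:~R * v 0 j).
set c := emb (simple_coroot i).
have HQ : \sum_j c 0 j ^+ 2 = (Qsp (simple_coroot i))%:~R.
  rewrite /Qsp rmorph_sum; apply: eq_bigr => j _; by rewrite !mxE rmorphXn.
have Ha : a * \sum_j c 0 j ^+ 2 = 2 * \sum_j v 0 j * c 0 j.
  rewrite HQ /a mulr_suml mulr_sumr; apply: eq_bigr => j _.
  rewrite [c 0 j]mxE mulrAC -intrM root_coroot intrM; ring.
have : \sum_j ((v - a *: c) 0 j ^+ 2 - v 0 j ^+ 2) =
       a * (a * \sum_j c 0 j ^+ 2 - 2 * \sum_j v 0 j * c 0 j).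
  rewrite mulrBr !mulr_sumr -sumrB; apply: eq_bigr => j _; rewrite !mxE; ring.
rewrite Ha subrr mulr0 sumrB => /eqP; by rewrite subr_eq0 => /eqP.
Qed.

Lemma weyl_sqr r w (v : 'rV[rat]_r) : sqr (weyl_act w v) = sqr v.
Proof. elim: w => //= i w IH; by rewrite sref_sqr. Qed.

Lemma rho_odd r : exists t : 'I_r -> int,
  forall j, rho_vee r 0 j = 2^-1 * (2 * t j + 1)%:~R.
Proof.
exists (fun j => \sum_(i < r) \sum_(j' < r | (i < j')%N) ev i 0 j) => j.
rewrite /rho_vee !mxE; congr (_ * _); congr (_%:~R).
rewrite !summxE; congr (_ + _).
- rewrite mulr_sumr; apply: eq_bigr => i _; rewrite summxE mulr_sumr.
  apply: eq_bigr => j' _; rewrite !mxE; ring.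
- under eq_bigr do rewrite mxE.
  rewrite (bigD1 j) //= eqxx big1 ?addr0 // => i /negbTE.
  by rewrite eq_sym => ->.
Qed.

Lemma converse r n q (lst : 'I_r) (y l : 'rV[int]_r) w :
  n = (4 * q)%N -> (0 < q)%N -> (lst.+1 = r)%N ->
  in_YQn (@Qsp r) n l -> twisted_act w y - emb y = emb l ->
  in_YQn_sc (@Qsp r) n l.
Proof.
move=> Hn Hq Hlst Hl E.
have H2 : (2 %| n)%N by rewrite Hn; apply: dvdn_mulr.
set m := (n %/ 2)%N%:Z.
have Hm : m = 2 * q%:Z.
  by rewrite /m Hn (_ : (4 * q = (2 * q) * 2)%N) ?mulnK // ?PoszM; lia.
have Hm0 : m != 0 by rewrite Hm mulf_eq0 negb_or /=; apply/eqP; lia.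
have Hnm : n%:Z = 2 * m by rewrite /m -PoszM mulnC divnK.
have Hdiv : forall j : 'I_r, (m %| l 0%R j)%Z.
  move=> j; have := Hl (ev j).
  have -> : BQ (@Qsp r) l (ev j) = 2 * l 0 j.
    rewrite BQ_eq /dotz; congr (_ * _).
    under eq_bigr do rewrite mxE eq_sym.
    exact: sum_delta.
  by rewrite Hnm dvdz_mul2l.
pose k := fun j : 'I_r => (l 0%R j %/ m)%Z.
have Hk : forall j, l 0 j = k j * m by move=> j; rewrite /k divzK.
apply: (sc_of Hlst H2 Hk).
set v := emb y - rho_vee r.
have HW : weyl_act w v = emb l + v.
  rewrite -E /twisted_act -/v; apply/matrixP => a b; rewrite !mxE; ring.
have Hsq := weyl_sqr w v; rewrite HW in Hsq.
have [t Ht] := rho_odd r.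
have Hsum : \sum_j ((2 * (y 0 j - t j) - 1) * l 0 j + l 0 j ^+ 2) = 0.
  apply/eqP; rewrite -(intr_eq0 rat) rmorph_sum.
  apply/eqP; transitivity (sqr (emb l + v) - sqr v); last by rewrite Hsq subrr.
  rewrite /sqr -sumrB; apply: eq_bigr => j _.
  have Hv : v 0 j = (y 0 j)%:~R - 2^-1 * (2 * t j + 1)%:~R.
    by rewrite -Ht /v mxE; congr (_ + _); rewrite mxE.
  rewrite [(emb l + v) 0 j]mxE [emb l 0 j]mxE Hv.
  rewrite !(rmorphD, rmorphB, rmorphM, rmorphXn, rmorph1) /=.
  by field.
set X := \sum_j ((y 0 j - t j) * k j + q%:Z * k j ^+ 2).
have HX : m * (2 * X - \sum_j k j) = 0.
  apply: (etrans _ Hsum); rewrite /X mulrBr !mulr_sumr -sumrB; apply: eq_bigr => j _.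
  rewrite Hk Hm; ring.
move/eqP: HX; rewrite mulf_eq0 (negbTE Hm0) /= subr_eq0 => /eqP HS.
apply/dvdzP; exists X; by rewrite -HS mulrC.
Qed.

Theorem lemma3p4 (r n : nat) :
  (0 < r)%N -> (0 < n)%N -> (4 %| n)%N -> persistent (@Qsp r) n.
Proof.
move=> r0 n0 n4.
have Hlt : (r.-1 < r)%N by lia.
pose lst := Ordinal Hlt.
have Hlst : (lst.+1 = r)%N by rewrite /= prednK.
set q := (n %/ 4)%N.
have Hn : n = (4 * q)%N by rewrite mulnC divnK.
have Hq : (0 < q)%N by lia.
have H2 : (2 %| n)%N by rewrite Hn; apply: dvdn_mulr.
move=> y w; split => -[l [Hl E]]; exists l; split => //.
- exact: forward.
- exact: (converse Hn Hq Hlst Hl E).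
Qed.
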